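(* Let $F$ be a finite field of characteristic $3$. Let $k\ge 0$ be an integer, $m=3k+1$, and $t$ an integer with $t^3\equiv 1\pmod m$ and $\gcd(m,t-1)=1$. Let $G=T_{3m}=\langle x,y\mid x^m=y^3=1,\ y^{-1}xy=x^t\rangle$ (of order $3m$), $FG$ its group algebra, and $H=\langle x\rangle$. Then $\Delta(G,H)$ is a semisimple ring.
   Context: $\Delta(G,H)$ is the ideal of $FG$ generated by $\{h-1\mid h\in H\}$, regarded as a ring with the multiplication of $FG$. *)

(* Defs.v *)
From HB Require Import structures.
From mathcomp Require Import all_boot all_order all_algebra all_fingroup.
Set Implicit Arguments. Unset Strict Implicit. Unset Printing Implicit Defensive.
Import GRing.Theory.
Local Open Scope ring_scope.

(* Group algebra F[G] of a subgroup G of a finite group type gT: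
   elements are functions gT -> F supported on G, with convolution product. *)
Section GroupAlgebra.
Variables (F : fieldType) (gT : finGroupType).

Definition in_FG (G : {set gT}) (a : {ffun gT -> F}) : Prop :=
  forall g, g \notin G -> a g = 0.

Definition ga_mul (G : {set gT}) (a b : {ffun gT -> F}) : {ffun gT -> F} :=
  [ffun g => \sum_(h in G) a h * b (h^-1 * g)%g].

Definition ga_elt (g : gT) : {ffun gT -> F} := [ffun z => (z == g)%:R].

End GroupAlgebra.

(* Generic ring-theoretic notions for a (possibly non-unital) ring given as a
   subset R of an additive group V, closed under a multiplication mul. *)
Section RingNotions.
Variable V : zmodType.

Definition is_ideal_of (R : V -> Prop) (mul : V -> V -> V) (I : V -> Prop) : Prop :=
  [/\ (forall a, I a -> R a), I 0,
      (forall a b, I a -> I b -> I (a - b)) &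
      (forall r a, R r -> I a -> I (mul r a) /\ I (mul a r))].

(* prodn mul f n = f 0 * f 1 * ... * f n *)
Fixpoint prodn (mul : V -> V -> V) (f : nat -> V) (n : nat) : V :=
  if n is n'.+1 then mul (prodn mul f n') (f n) else f 0%N.

Definition nilpotent_set (mul : V -> V -> V) (I : V -> Prop) : Prop :=
  exists n, forall f : nat -> V, (forall i, I (f i)) -> prodn mul f n = 0.

(* a (finite, hence Artinian) ring is semisimple iff it has no nonzero
   nilpotent two-sided ideal (i.e. its Jacobson radical vanishes) *)
Definition semisimple_ring (R : V -> Prop) (mul : V -> V -> V) : Prop :=
  forall I, is_ideal_of R mul I -> nilpotent_set mul I -> forall a, I a -> a = 0.

End RingNotions.

Definition Delta (F : fieldType) (gT : finGroupType) (G H : {set gT})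
  (a : {ffun gT -> F}) : Prop :=
  forall I, is_ideal_of (@in_FG F gT G) (@ga_mul F gT G) I ->
    (forall h, h \in H -> I (ga_elt F h - ga_elt F 1%g)) -> I a.

(* Main.v *)
Require Import Defs.
From HB Require Import structures.
From mathcomp Require Import all_boot all_order all_algebra all_fingroup.
From mathcomp Require Import cyclic.
Set Implicit Arguments. Unset Strict Implicit. Unset Printing Implicit Defensive.
Import GRing.Theory.
Local Open Scope ring_scope.

Section GA.
Variables (F : fieldType) (gT : finGroupType) (G : {group gT}).
Local Notation mul := (@ga_mul F gT G).
Local Notation d := (ga_elt F).
Local Notation FG := (@in_FG F gT G).
Definition sc (c : F) (a : {ffun gT -> F}) : {ffun gT -> F} := [ffun g => c * a g].

Lemma gmulE a b g : mul a b g = \sum_(h in G) a h * b (h^-1 * g)%g.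
Proof. by rewrite ffunE. Qed.

Lemma gmulDl a b c : mul (a + b) c = mul a c + mul b c.
Proof.
apply/ffunP=> g; rewrite !ffunE -big_split /=; apply: eq_bigr => h _.
by rewrite ffunE mulrDl.
Qed.

Lemma gmulDr a b c : mul a (b + c) = mul a b + mul a c.
Proof.
apply/ffunP=> g; rewrite !ffunE -big_split /=; apply: eq_bigr => h _.
by rewrite ffunE mulrDr.
Qed.

Lemma gmul0l a : mul 0 a = 0.
Proof. by apply/ffunP=> g; rewrite !ffunE big1 // => h _; rewrite ffunE mul0r. Qed.

Lemma gmul0r a : mul a 0 = 0.
Proof. by apply/ffunP=> g; rewrite !ffunE big1 // => h _; rewrite ffunE mulr0. Qed.

Lemma gmulNl a b : mul (- a) b = - mul a b.
Proof. by apply/eqP; rewrite -subr_eq0 opprK -gmulDl addNr gmul0l. Qed.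
Lemma gmulNr a b : mul a (- b) = - mul a b.
Proof. by apply/eqP; rewrite -subr_eq0 opprK -gmulDr addNr gmul0r. Qed.
Lemma gmulBl a b c : mul (a - b) c = mul a c - mul b c.
Proof. by rewrite gmulDl gmulNl. Qed.
Lemma gmulBr a b c : mul a (b - c) = mul a b - mul a c.
Proof. by rewrite gmulDr gmulNr. Qed.

Lemma gmul_scl c a b : mul (sc c a) b = sc c (mul a b).
Proof.
apply/ffunP=> g; rewrite !ffunE big_distrr /=; apply: eq_bigr => h _.
by rewrite ffunE mulrA.
Qed.
Lemma gmul_scr c a b : mul a (sc c b) = sc c (mul a b).
Proof.
apply/ffunP=> g; rewrite !ffunE big_distrr /=; apply: eq_bigr => h _.
by rewrite ffunE mulrCA.
Qed.

Lemma gmul_suml (I : Type) (r : seq I) (P : pred I) (A : I -> {ffun gT -> F}) b :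
  mul (\sum_(i <- r | P i) A i) b = \sum_(i <- r | P i) mul (A i) b.
Proof.
elim/big_rec2: _ => [|i y1 y2 _ <-]; first exact: gmul0l.
by rewrite gmulDl.
Qed.
Lemma gmul_sumr (I : Type) (r : seq I) (P : pred I) (A : I -> {ffun gT -> F}) b :
  mul b (\sum_(i <- r | P i) A i) = \sum_(i <- r | P i) mul b (A i).
Proof.
elim/big_rec2: _ => [|i y1 y2 _ <-]; first exact: gmul0r.
by rewrite gmulDr.
Qed.

Lemma gmulA a b c : mul (mul a b) c = mul a (mul b c).
Proof.
apply/ffunP=> g; rewrite !gmulE.
under eq_bigr do rewrite gmulE big_distrl /=.
rewrite exchange_big /=; apply: eq_bigr => k Gk.
rewrite gmulE big_distrr /= (reindex_inj (mulgI k)) /=.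
apply: eq_big => [l|l _]; first by rewrite groupMl.
by rewrite mulKg invMg -mulgA mulrA.
Qed.

Lemma mul_eltl h a : h \in G -> mul (d h) a = [ffun g => a (h^-1 * g)%g].
Proof.
move=> Gh; apply/ffunP=> g; rewrite gmulE ffunE (bigD1 h) //= big1 => [|k /andP[_ nkh]].
  by rewrite ffunE eqxx mul1r addr0.
by rewrite ffunE (negPf nkh) mul0r.
Qed.

Lemma mul_eltr h a : h \in G -> FG a -> mul a (d h) = [ffun g => a (g * h^-1)%g].
Proof.
move=> Gh FGa; apply/ffunP=> g; rewrite gmulE ffunE.
have E k : ((k^-1 * g)%g == h) = (k == g * h^-1)%g.
  apply/eqP/eqP=> [<-|->]; first by rewrite invMg invgK mulKVg.
  by rewrite invMg invgK -mulgA mulVg mulg1.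
case Gg: (g * h^-1 \in G)%g.
  rewrite (bigD1 (g * h^-1)%g) //= big1 => [|k /andP[_ nkh]].
    by rewrite ffunE E eqxx mulr1 addr0.
  by rewrite ffunE E (negPf nkh) mulr0.
rewrite FGa ?Gg // big1 // => k Gk; rewrite ffunE E.
by case: eqP => [e|]; [rewrite -e Gk in Gg| rewrite mulr0].
Qed.

Lemma mul_FG a b : FG b -> FG (mul a b).
Proof.
move=> FGb g nGg; rewrite gmulE big1 // => h Gh.
by rewrite FGb ?mulr0 // groupMl ?groupV.
Qed.



Lemma FG_decomp a : FG a -> a = \sum_(g in G) sc (a g) (d g).
Proof.
move=> FGa; apply/ffunP=> g; rewrite sum_ffunE.
case Gg: (g \in G).
  rewrite (bigD1 g) //= big1 => [|k /andP[_ nkg]]; first by rewrite !ffunE eqxx mulr1 addr0.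
  by rewrite !ffunE eq_sym (negPf nkg) mulr0.
rewrite FGa ?Gg // big1 // => k Gk; rewrite !ffunE.
by case: eqP => [e|]; [rewrite e Gk in Gg| rewrite mulr0].
Qed.

Lemma d_FG g : g \in G -> FG (d g).
Proof. by move=> Gg k nGk; rewrite ffunE; case: eqP => // e; rewrite e Gg in nGk. Qed.


Lemma sum_closed (I : {ffun gT -> F} -> Prop) :
  I 0 -> (forall a b, I a -> I b -> I (a - b)) ->
  forall (J : Type) (r : seq J) (P : pred J) (A : J -> {ffun gT -> F}),
  (forall i, P i -> I (A i)) -> I (\sum_(i <- r | P i) A i).
Proof.
move=> I0 IB J r P A IA; apply: (big_rec I) => // i y Pi Iy.
have -> : A i + y = A i - (0 - y) by rewrite sub0r opprK.
by apply IB; [apply: IA | apply IB].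
Qed.

Variable H : {group gT}.
Hypotheses (sHG : H \subset G) (nHG : G \subset 'N(H)%g) (cH : (#|H|%:R : F) = 1).

Definition eH : {ffun gT -> F} := \sum_(h in H) d h.

Lemma eHE g : eH g = (g \in H)%:R.
Proof.
rewrite sum_ffunE; case Hg: (g \in H).
  rewrite (bigD1 g) //= big1 => [|k /andP[_ nkg]]; first by rewrite ffunE eqxx addr0.
  by rewrite ffunE eq_sym (negPf nkg).
by rewrite big1 // => k Hk; rewrite ffunE; case: eqP => // e; rewrite e Hk in Hg.
Qed.

Lemma eH_FG : FG eH.
Proof. by move=> g nGg; rewrite eHE; case Hg: (g \in H) => //; rewrite (subsetP sHG _ Hg) in nGg. Qed.

Lemma mul_eH_r a g : FG a -> mul a eH g = \sum_(k in H) a (g * k^-1)%g.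
Proof.
move=> FGa; rewrite /eH gmul_sumr sum_ffunE; apply: eq_bigr => k Hk.
by rewrite mul_eltr ?ffunE // (subsetP sHG).
Qed.

Lemma eH_comm_d g : g \in G -> mul (d g) eH = mul eH (d g).
Proof.
move=> Gg; rewrite mul_eltl // mul_eltr //; last exact: eH_FG.
apply/ffunP=> k; rewrite !ffunE !eHE.
have nH : (g^-1 \in 'N(H))%g by rewrite (subsetP nHG) ?groupV.
by rewrite -(memJ_norm (g^-1 * k)%g nH) /conjg invgK mulgA mulgA mulgV mul1g.
Qed.

Lemma eH_central r : FG r -> mul r eH = mul eH r.
Proof.
move=> FGr; rewrite (FG_decomp FGr) gmul_suml gmul_sumr; apply: eq_bigr => g Gg.
by rewrite gmul_scl gmul_scr eH_comm_d.
Qed.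

Definition J (a : {ffun gT -> F}) := FG a /\ mul a eH = 0.

Lemma FG0 : FG 0. Proof. by move=> g _; rewrite ffunE. Qed.
Lemma FGB a b : FG a -> FG b -> FG (a - b).
Proof. by move=> Fa Fb g nG; rewrite !ffunE Fa // Fb // subr0. Qed.

Lemma J_ideal : is_ideal_of FG mul J.
Proof.
split.
- by move=> a [].
- by split; [exact: FG0 | exact: gmul0l].
- by move=> a b [Fa Ea] [Fb Eb]; split; [exact: FGB | rewrite gmulBl Ea Eb subr0].
move=> r a Fr [Fa Ea]; split; split.
- exact: mul_FG.
- by rewrite gmulA Ea gmul0r.
- exact: mul_FG.
- by rewrite gmulA eH_central // -gmulA Ea gmul0l.
Qed.

Lemma d_eH h : h \in H -> mul (d h) eH = eH.
Proof.
move=> Hh; rewrite mul_eltl ?(subsetP sHG) //; apply/ffunP=> g.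
by rewrite ffunE !eHE groupMl ?groupV.
Qed.

Lemma Delta_J a : Delta G H a -> J a.
Proof.
move=> Da; apply: Da; first exact: J_ideal.
move=> h Hh; have Gh := subsetP sHG _ Hh; split.
  by apply: FGB; apply: d_FG.
by rewrite gmulBl d_eH // d_eH ?group1 // subrr.
Qed.

Lemma FG_ideal : is_ideal_of FG mul FG.
Proof.
split => //; [exact: FG0 | exact: FGB |].
by move=> r a Fr Fa; split; apply: mul_FG.
Qed.

Lemma Delta_ideal : is_ideal_of FG mul (Delta G H).
Proof.
split.
- move=> a Da; apply: Da; first exact: FG_ideal.
  by move=> h Hh; apply: FGB; apply: d_FG; rewrite ?group1 ?(subsetP sHG).
- by move=> I [_ I0 _ _].
- by move=> a b Da Db I HI gI; case: (HI) => _ _ IB _; apply: IB; [apply: Da|apply: Db].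
- move=> r a Fr Da; split=> I HI gI; case: (HI) => _ _ _ IM; by case: (IM r a Fr (Da I HI gI)).
Qed.

Definition u := d 1%g - eH.

Lemma u_Delta : Delta G H u.
Proof.
have -> : u = 0 - \sum_(h in H) (d h - d 1%g).
  rewrite sumrB sumr_const; apply/ffunP=> g; rewrite !ffunE ffunMnE -[d 1%g g *+ _]mulr_natr cH mulr1 ffunE -/eH.
  by rewrite sub0r opprB.
move=> I HI gI; case: (HI) => _ I0 IB _; apply IB => //.
by apply: sum_closed => // h Hh; apply: gI.
Qed.

Lemma u_mull a : J a -> mul u a = a.
Proof.
move=> [Fa Ea]; rewrite gmulBl -eH_central // Ea subr0 mul_eltl //.
by apply/ffunP=> g; rewrite ffunE invg1 mul1g.
Qed.

Lemma u_mulr a : J a -> mul a u = a.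
Proof.
move=> [Fa Ea]; rewrite gmulBr Ea subr0 mul_eltr //.
by apply/ffunP=> g; rewrite ffunE invg1 mulg1.
Qed.


Hypothesis ffree : forall g, g \in G -> g \notin H -> forall k, k \in H -> (k ^ g = k)%g -> k = 1%g.

Lemma reindex_H (b : {ffun gT -> F}) g : g \in G -> g \notin H -> FG b ->
  \sum_(h in H) b (h^-1 * g * h)%g = mul b eH g.
Proof.
move=> Gg nHg Fb; rewrite mul_eH_r //.
have nH : (g \in 'N(H))%g by rewrite (subsetP nHG).
pose phi := fun h => (h^-1 * h ^ g)%g.
have phiH h : h \in H -> phi h \in H.
  by move=> Hh; rewrite groupM ?groupV // memJ_norm.
have phi_inj : {in H &, injective phi}.
  move=> h1 h2 H1 H2 e; apply/eqP; rewrite eq_sym eq_mulgV1; apply/eqP.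
  apply: (ffree Gg nHg); first by rewrite groupM ?groupV.
  rewrite conjMg conjVg; have E : (h2 ^ g = h2 * (h1^-1 * h1 ^ g))%g by rewrite /phi in e; rewrite e mulKVg.
  by rewrite E mulgA mulgK.
have -> : \sum_(h in H) b (h^-1 * g * h)%g = \sum_(h in H) b (g * (phi h)^-1)%g.
  apply: eq_bigr => h _; congr (b _).
  by rewrite /phi /conjg !invMg !invgK !mulgA mulgV mul1g.
rewrite -(big_imset (fun k => b (g * k^-1)%g) phi_inj) /=.
have -> : [set phi x | x in H] = H :> {set gT}.
  apply/eqP; rewrite eqEcard card_in_imset // leqnn andbT.
  by apply/subsetP => _ /imsetP[h Hh ->]; apply: phiH.
by [].
Qed.

Lemma main_generic
  (red : forall c : {ffun gT -> F}, (forall g, g \notin H -> c g = 0) ->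
     (exists n, prodn mul (fun _ => c) n = 0) -> c = 0) :
  semisimple_ring (Delta G H) mul.
Proof.
move=> I [ID I0 IB IM] [n nilI] a Ia.
have [Fa Ea] := Delta_J (ID a Ia).
have [_ _ _ DM] := Delta_ideal.
apply/ffunP=> g0; rewrite ffunE.
case Gg0: (g0 \in G); last by rewrite Fa ?Gg0.
set r := mul (d g0^-1) u.
have Dr : Delta G H r by case: (DM (d g0^-1) u (d_FG (groupVr Gg0)) u_Delta).
set b := mul r a.
have Ib : I b by case: (IM r a Dr Ia).
have bE : b = mul (d g0^-1) a by rewrite /b /r gmulA u_mull.
have Jb := Delta_J (ID b Ib); have [Fb Eb] := Jb.
set c := \sum_(h in H) mul (mul (mul (d h) u) b) (mul u (d h^-1)).
have Ic : I c.
  apply: sum_closed => // h Hh.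
  have Gh : h \in G by rewrite (subsetP sHG).
  have Dl : Delta G H (mul (d h) u) by case: (DM (d h) u (d_FG Gh) u_Delta).
  have Dr' : Delta G H (mul u (d h^-1)).
    by case: (DM (d h^-1) u (d_FG (groupVr Gh)) u_Delta).
  have [I1 _] := IM _ _ Dl Ib.
  by have [_ I2] := IM _ _ Dr' I1.
have cE g : c g = \sum_(h in H) b (h^-1 * g * h)%g.
  rewrite /c sum_ffunE; apply: eq_bigr => h Hh.
  have Gh : h \in G by rewrite (subsetP sHG).
  rewrite [mul (mul (d h) u) b]gmulA (u_mull Jb) -gmulA.
  rewrite [mul (mul (d h) b) u]gmulA (u_mulr Jb).
  rewrite mul_eltr ?groupV //; last exact: mul_FG.
  by rewrite ffunE mul_eltl // ffunE invgK mulgA.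
have c0 : c = 0.
  apply: red; last by exists n; apply: nilI.
  move=> g nHg; rewrite cE; case Gg: (g \in G).
    by rewrite reindex_H // Eb ffunE.
  rewrite big1 // => h Hh; have Gh : h \in G by rewrite (subsetP sHG).
  by rewrite Fb // groupMr // groupMl ?groupV // Gg.
have := cE 1%g; rewrite c0 ffunE.
under eq_bigr do rewrite mulg1 mulVg.
rewrite sumr_const -mulr_natr cH mulr1 bE mul_eltl ?groupV // ffunE invgK mulg1.
by move->.
Qed.

End GA.

Section Red.
Variables (F : fieldType) (gT : finGroupType) (G : {group gT}) (x : gT).
Hypotheses (Gx : x \in G).
Local Notation mul := (@ga_mul F gT G).
Local Notation d := (ga_elt F).
Local Notation FG := (@in_FG F gT G).

Lemma sc0 (a : {ffun gT -> F}) : sc 0 a = 0. Proof. by apply/ffunP=> g; rewrite !ffunE mul0r. Qed.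
Lemma scD c1 c2 (a : {ffun gT -> F}) : sc (c1 + c2) a = sc c1 a + sc c2 a.
Proof. by apply/ffunP=> g; rewrite !ffunE mulrDl. Qed.

Definition pi (p : {poly F}) := \sum_(i < size p) sc p`_i (d (x ^+ i)%g).

Lemma piE n (p : {poly F}) : (size p <= n)%N -> pi p = \sum_(i < n) sc p`_i (d (x ^+ i)%g).
Proof.
move=> Hn; rewrite /pi (big_ord_widen n (fun i => sc p`_i (d (x ^+ i)%g)) Hn).
rewrite big_mkcond /=; apply: eq_bigr => i _; case: ifP => // /negbT.
by rewrite -leqNgt => Hi; rewrite nth_default // sc0.
Qed.

Lemma pi0 : pi 0 = 0.
Proof. by rewrite /pi size_poly0 big_ord0. Qed.

Lemma piD p q : pi (p + q) = pi p + pi q.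
Proof.
set n := maxn (size p) (size q).
rewrite (piE (size_polyD p q)) (@piE n p) ?leq_maxl // (@piE n q) ?leq_maxr //.
by rewrite -big_split; apply: eq_bigr => i _; rewrite coefD scD.
Qed.

Lemma pi_sum (I : Type) (r : seq I) (P : pred I) (A : I -> {poly F}) :
  pi (\sum_(i <- r | P i) A i) = \sum_(i <- r | P i) pi (A i).
Proof. by elim/big_rec2: _ => [|i y1 y2 _ <-]; rewrite ?pi0 // piD. Qed.

Lemma pi_mono a j : pi (a *: 'X^j) = sc a (d (x ^+ j)%g).
Proof.
rewrite (@piE j.+1); last by rewrite (leq_trans (size_scale_leq _ _)) // size_polyXn.
rewrite big_ord_recr /= big1 ?add0r => [|i _]; first by rewrite coefZ coefXn eqxx mulr1.
by rewrite coefZ coefXn (ltn_eqF (ltn_ord i)) mulr0 sc0.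
Qed.

Lemma d_mul g h : g \in G -> mul (d g) (d h) = d (g * h)%g.
Proof.
move=> Gg; rewrite mul_eltl //; apply/ffunP=> k; rewrite !ffunE.
by rewrite (_ : (g^-1 * k == h)%g = (k == g * h)%g) //; apply/eqP/eqP=> [<-|->]; rewrite ?mulKVg ?mulKg.
Qed.

Lemma pi_mulX p : pi (p * 'X) = mul (pi p) (d x).
Proof.
rewrite (@piE (size p).+1); last first.
  by rewrite (leq_trans (size_polyMleq _ _)) // size_polyX addn2.
rewrite big_ord_recl coefMX eqxx sc0 add0r /pi gmul_suml; apply: eq_bigr => i _.
rewrite coefMX /= gmul_scl d_mul ?groupX // -expgSr.
by congr (sc _ (d _)); rewrite /bump leq0n.
Qed.

Lemma pi_FG p : FG (pi p).
Proof.
move=> g nGg; rewrite /pi sum_ffunE big1 // => i _; rewrite !ffunE.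
case: eqP => [e|]; last by rewrite mulr0.
by rewrite e groupX in nGg.
Qed.

Lemma pi_C c : pi c%:P = sc c (d 1%g).
Proof. by rewrite (@piE 1) ?size_polyC_leq1 // big_ord1 coefC /= expg0. Qed.

Lemma pi_mul p q : pi (p * q) = mul (pi p) (pi q).
Proof.
elim/poly_ind: q => [|q c IH]; first by rewrite mulr0 pi0 gmul0r.
rewrite mulrDr mulrA piD (pi_mulX (p * q)) IH piD (pi_mulX q) gmulA gmulDr; congr (_ + _).
rewrite pi_C gmul_scr mul_eltr //; last exact: pi_FG.
rewrite mulrC mul_polyC (@piE (size p)) ?(size_scale_leq) //.
rewrite /pi; apply/ffunP=> g; rewrite !ffunE invg1 mulg1 !sum_ffunE big_distrr /=.
by apply: eq_bigr => i _; rewrite !ffunE coefZ mulrA.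
Qed.

Lemma pi_prodn P n : prodn mul (fun _ => pi P) n = pi (P ^+ n.+1).
Proof.
elim: n => [|n IH] /=; first by rewrite expr1.
by rewrite IH -pi_mul -exprSr.
Qed.


Hypothesis ch3 : (3 \in [pchar F])%R.
Hypothesis cop : coprime #[x]%g 3.

Lemma frob N m (a : nat -> F) :
  (\sum_(i < m) a i *: 'X^i) ^+ (3 ^ N) = \sum_(i < m) (a i ^+ (3 ^ N)) *: 'X^(i * 3 ^ N).
Proof.
have ch : (3 \in [pchar {poly F}])%R by rewrite pchar_poly.
elim: N => [|N IH].
  by rewrite expn0 expr1; apply: eq_bigr => i _; rewrite expr1 muln1.
rewrite expnSr exprM IH -(pFrobenius_autE ch) rmorph_sum; apply: eq_bigr => i _.
rewrite -!mul_polyC /= pFrobenius_autE exprMn -polyC_exp -!exprM mulnA.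
by [].
Qed.

Lemma evalE (z : gT) (hz : #[z]%g = #[x]%g) (f : nat -> F) (j : 'I_#[x]%g) :
  (\sum_(i < #[x]%g) sc (f i) (d (z ^+ i)%g)) (z ^+ j)%g = f j.
Proof.
rewrite sum_ffunE (bigD1 j) //= big1 => [|i /negPf nij].
  by rewrite !ffunE eqxx mulr1 addr0.
by rewrite !ffunE eq_expg_ord ?hz // eq_sym nij mulr0.
Qed.

Lemma reduced (c : {ffun gT -> F}) : (forall g, g \notin <[x]>%g -> c g = 0) ->
  (exists n, prodn mul (fun _ => c) n = 0) -> c = 0.
Proof.
move=> supp [n nil].
have cx (g : gT) : g \in <[x]>%g -> exists j : 'I_#[x]%g, g = (x ^+ j)%g.
  case/cycleP => i ->; exists (Ordinal (ltn_pmod i (order_gt0 x))).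
  by rewrite /= expg_mod_order.
pose P := \sum_(i < #[x]%g) c (x ^+ i)%g *: 'X^i.
have cE : c = pi P.
  rewrite pi_sum; under eq_bigr do rewrite pi_mono.
  apply/ffunP => g; case Hg: (g \in <[x]>%g).
    by have [j ->] := cx g Hg; rewrite (@evalE x _ (fun i => c (x ^+ i)%g)).
  rewrite supp ?Hg // sum_ffunE big1 // => i _; rewrite !ffunE.
  case: eqP => [e|]; last by rewrite mulr0.
  by rewrite e mem_cycle in Hg.
rewrite cE pi_prodn in nil.
pose Q := (3 ^ n.+1)%N.
have nQ : (n.+1 <= Q)%N by apply: ltnW; apply: ltn_expl.
have PQ : pi (P ^+ Q) = 0 by rewrite -(subnKC nQ) exprD pi_mul nil gmul0l.
pose y := (x ^+ Q)%g.
have oy : #[y]%g = #[x]%g.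
  rewrite orderXgcd; have /eqP -> : coprime #[x]%g Q by apply: coprimeXr.
  by rewrite divn1.
have PQ' : \sum_(i < #[x]%g) sc (c (x ^+ i)%g ^+ Q) (d (y ^+ i)%g) = 0.
  rewrite -[RHS]PQ /P /Q (frob n.+1 #[x]%g (fun i => c (x ^+ i)%g)) pi_sum; apply: eq_bigr => i _.
  by rewrite pi_mono /y -expgM mulnC.
apply/ffunP => g; rewrite ffunE; case Hg: (g \in <[x]>%g); last by rewrite supp ?Hg.
have [j ->] := cx g Hg.
have := congr1 (fun f : {ffun gT -> F} => f (y ^+ j)%g) PQ'; rewrite /= (@evalE y oy (fun i => c (x ^+ i)%g ^+ Q)) ffunE.
by move/eqP; rewrite expf_eq0 => /andP[_ /eqP].
Qed.

End Red.

Theorem proposition3p10 (F : finFieldType) (k t : nat) (gT : finGroupType)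
    (G H : {group gT}) (x y : gT) :
  (3%N \in [pchar F])%R ->
  (t ^ 3 = 1 %[mod 3 * k + 1])%N ->
  coprime (3 * k + 1) (t - 1) ->
  G :=: <<[set x; y]>>%g ->
  #[x]%g = (3 * k + 1)%N ->
  #[y]%g = 3%N ->
  (x ^ y = x ^+ t)%g ->
  #|G| = (3 * (3 * k + 1))%N ->
  H :=: <[x]>%g ->
  semisimple_ring (@Delta F gT G H) (@ga_mul F gT G).
Proof.
move=> ch3 _ cop HG ox oy conj cardG HH.
have Gx : x \in G by rewrite HG mem_gen // !inE eqxx.
have Gy : y \in G by rewrite HG mem_gen // !inE eqxx orbT.
have sHG : H \subset G by rewrite HH cycle_subG.
have nHy : (y \in 'N(<[x]>))%g by rewrite inE -cycleJ conj cycle_subG mem_cycle.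
have nHG : (G \subset 'N(H))%g.
  rewrite HG HH gen_subG; apply/subsetP => z; rewrite !inE => /orP[]/eqP ->.
  - by rewrite -cycleJ conjgE mulKg.
  - by rewrite -cycleJ conj cycle_subG mem_cycle.
have cardH : #|H| = (3 * k + 1)%N by rewrite HH.
have cH : ((#|H|%:R : F) = 1)%R.
  by rewrite cardH GRing.natrD GRing.natrM (GRing.pcharf0 ch3) GRing.mul0r GRing.add0r.
have cop3 : coprime (3 * k + 1) 3.
  by rewrite coprime_sym /coprime -gcdn_modr mulnC modnMDl.
have fix1 : forall k0, k0 \in H -> (k0 ^ y = k0)%g -> k0 = 1%g.
  move=> k0; rewrite HH => /cycleP[i ->] ky.
  rewrite conjXg conj -expgM in ky.
  move/eqP: ky; rewrite eq_expg_mod_order ox => ky.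
  have mi : (3 * k + 1 %| i)%N.
    case: t cop conj ky => [|t] cop conj ky.
      by move: cop; rewrite sub0n /coprime gcdn0 => /eqP ->; apply: dvd1n.
    rewrite -(Gauss_dvdr _ cop) subn1 /=.
    by move: ky; rewrite mulSn -{3}[i]addn0 eqn_modDl mod0n.
  by rewrite -expg_mod_order ox (eqP mi) expg0.
have ffree : forall g, g \in G -> g \notin H -> forall k0, k0 \in H ->
    (k0 ^ g = k0)%g -> k0 = 1%g.
  move=> g Gg nHg k0 Hk0 ck.
  have eqG : (H * <[y]>)%g = G :> {set gT}.
    apply/eqP; rewrite eqEcard mulG_subG sHG cycle_subG Gy /=.
    have := mul_cardG H <[y]>%G.
    rewrite coprime_TIg ?cards1 ?muln1; last by rewrite cardH [#|_|]oy.
    by move <-; rewrite cardG cardH [#|_|]oy mulnC.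
  have : g \in (H * <[y]>)%g by rewrite eqG.
  case/mulsgP => h z Hh /cycleP[j ->] gE; subst g.
  have cHa : abelian H by rewrite HH cycle_abelian.
  have kh : (k0 ^ h = k0)%g.
    by rewrite conjgE ((centsP cHa) k0 Hk0 h Hh) mulKg.
  rewrite conjgM kh -(expg_mod_order y j) oy in ck.
  rewrite -(expg_mod_order y j) oy in nHg.
  case: (j %% 3)%N (ltn_pmod j (isT : (0 < 3)%N)) ck nHg => [|[|[|r]]] // _.
  - by rewrite expg0 mulg1 Hh.
  - by rewrite expg1 => ck _; apply: fix1.
  - move=> ck _; apply: fix1 => //.
    have : (k0 ^ (y ^+ 2 * y ^+ 2) = k0)%g by rewrite conjgM ck ck.
    by rewrite -expgD -(expg_mod_order y) oy expg1.
apply: (main_generic sHG nHG cH ffree).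
move=> c supp nil; apply: (reduced Gx ch3 _ _ nil) => [|g ng].
  by rewrite ox.
by apply: supp; rewrite HH.
Qed.
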